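(* Let $n$ be even and $k \geq 2$, and let $\Sigma=\{1,\dots,k\}$. Then the parity language $L^{\mathrm{even}}_{n,k}=\{w \in \Sigma^n: |w|_j \equiv 0 \pmod 2 \text{ for all } j \in \Sigma\}$ requires regular expressions of length $\mathrm{rpn}(L^{\mathrm{even}}_{n,k}) \geq \Omega\big(n^{k-2} (4k \ln k )^{2-k}\big) = n^{k-2} k^{-\Theta(k)}$.
   Context: $|w|_j$ denotes the number of occurrences of the letter $j$ in the word $w$. Regular expressions are built from $\epsilon$ and letters by union and concatenation (no $\emptyset$); $\mathrm{rpn}(L)$ is the minimum number of syntax-tree nodes of an expression describing $L$. *)

(* Defs.v *)
From Stdlib Require Import Reals List Arith PeanoNat.
Import ListNotations.

Inductive regex : Type :=
  | REps : regex
  | RLet : nat -> regex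
  | RUnion : regex -> regex -> regex
  | RCat : regex -> regex -> regex.

Fixpoint lang (e : regex) (w : list nat) : Prop :=
  match e with
  | REps => w = []
  | RLet a => w = [a]
  | RUnion e1 e2 => lang e1 w \/ lang e2 w
  | RCat e1 e2 => exists u v, w = u ++ v /\ lang e1 u /\ lang e2 v
  end.

Fixpoint rsize (e : regex) : nat :=
  match e with
  | REps | RLet _ => 1
  | RUnion e1 e2 | RCat e1 e2 => S (rsize e1 + rsize e2)
  end.

Definition L_even (n k : nat) (w : list nat) : Prop :=
  length w = n /\
  (forall a, In a w -> 1 <= a <= k) /\
  (forall j, 1 <= j <= k -> Nat.even (count_occ Nat.eq_dec w j) = true).

(* Main.v *)
Require Import Defs.
From Stdlib Require Import Reals List Arith PeanoNat Lia Bool Lra.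
Import ListNotations.

Definition cnt (w : list nat) (c : nat) := count_occ Nat.eq_dec w c.

Definition Hom (e : regex) : Prop :=
  forall w w', lang e w -> lang e w' -> length w = length w' /\
    forall c, Nat.even (cnt w c) = Nat.even (cnt w' c).

Lemma lang_ne : forall e, exists w, lang e w.
Proof.
  induction e as [| a | f [u Hu] g [v Hv] | f [u Hu] g [v Hv]]; simpl.
  - eauto.
  - eauto.
  - eauto.
  - exists (u ++ v), u, v; auto.
Qed.

Lemma even_cancel : forall a a' b,
  Nat.even (a + b) = Nat.even (a' + b) -> Nat.even a = Nat.even a'.
Proof.
  intros a a' b H. rewrite !Nat.even_add in H.
  destruct (Nat.even a), (Nat.even a'), (Nat.even b); simpl in *; congruence.
Qed.

Lemma even_cancel_l : forall a a' b,
  Nat.even (b + a) = Nat.even (b + a') -> Nat.even a = Nat.even a'.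
Proof.
  intros a a' b H. apply (even_cancel _ _ b). rewrite (Nat.add_comm a), (Nat.add_comm a'). auto.
Qed.

Lemma cnt_app : forall u v c, cnt (u ++ v) c = cnt u c + cnt v c.
Proof. intros. unfold cnt. apply count_occ_app. Qed.

Lemma Hom_unl : forall f g, Hom (RUnion f g) -> Hom f.
Proof. intros f g H w w' Hw Hw'. apply H; simpl; auto. Qed.
Lemma Hom_unr : forall f g, Hom (RUnion f g) -> Hom g.
Proof. intros f g H w w' Hw Hw'. apply H; simpl; auto. Qed.
Lemma Hom_catl : forall f g, Hom (RCat f g) -> Hom f.
Proof.
  intros f g H w w' Hw Hw'. destruct (lang_ne g) as [v Hv].
  destruct (H (w ++ v) (w' ++ v)) as [H1 H2]; simpl; eauto 6.
  rewrite !length_app in H1. split; [lia|].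
  intros c. specialize (H2 c). rewrite !cnt_app in H2. eapply even_cancel; eauto.
Qed.
Lemma Hom_catr : forall f g, Hom (RCat f g) -> Hom g.
Proof.
  intros f g H w w' Hw Hw'. destruct (lang_ne f) as [u Hu].
  destruct (H (u ++ w) (u ++ w')) as [H1 H2]; simpl; eauto 6.
  rewrite !length_app in H1. split; [lia|].
  intros c. specialize (H2 c). rewrite !cnt_app in H2. eapply even_cancel_l; eauto.
Qed.

Fixpoint len (e : regex) : nat :=
  match e with
  | REps => 0
  | RLet _ => 1
  | RUnion f _ => len f
  | RCat f g => len f + len g
  end.

Lemma len_ok : forall e, Hom e -> forall w, lang e w -> length w = len e.
Proof.
  induction e; simpl; intros H w Hw.
  - subst; auto.
  - subst; auto.
  - destruct Hw as [Hw|Hw].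
    + apply IHe1; auto. eapply Hom_unl; eauto.
    + destruct (lang_ne e1) as [u Hu].
      destruct (H w u) as [H1 _]; simpl; auto.
      rewrite H1. apply IHe1; auto. eapply Hom_unl; eauto.
  - destruct Hw as (u & v & -> & Hu & Hv). rewrite length_app.
    rewrite (IHe1 (Hom_catl _ _ H) u Hu), (IHe2 (Hom_catr _ _ H) v Hv). auto.
Qed.

Section K.
Variable K : nat.

Definition dec (i : nat) (b : bool) : nat := if b then i mod K + 2 else 1.
Fixpoint decode (i : nat) (x : list bool) : list nat :=
  match x with [] => [] | b :: x' => dec i b :: decode (S i) x' end.

Lemma decode_length : forall x i, length (decode i x) = length x.
Proof. induction x; simpl; auto. Qed.

Lemma decode_app : forall x y i, decode i (x ++ y) = decode i x ++ decode (i + length x) y.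
Proof.
  induction x; simpl; intros. rewrite Nat.add_0_r; auto.
  rewrite IHx. do 3 f_equal. lia.
Qed.

Fixpoint G (i : nat) (e : regex) : list (list bool) :=
  match e with
  | REps => [[]]
  | RLet a => (if Nat.eqb a 1 then [[false]] else []) ++
              (if Nat.eqb a (i mod K + 2) then [[true]] else [])
  | RUnion f g => G i f ++ G i g
  | RCat f g => flat_map (fun x => map (fun y => x ++ y) (G (i + len f) g)) (G i f)
  end.

Lemma G_sound : forall e, Hom e -> forall i x, In x (G i e) -> lang e (decode i x).
Proof.
  induction e; simpl; intros H i x Hx.
  - destruct Hx as [<-|[]]; auto.
  - apply in_app_or in Hx. destruct Hx as [Hx|Hx].
    + destruct (Nat.eqb_spec n 1); [|destruct Hx]. destruct Hx as [<-|[]]; simpl; subst; auto.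
    + destruct (Nat.eqb_spec n (i mod K + 2)); [|destruct Hx]. destruct Hx as [<-|[]]; simpl; subst; auto.
  - apply in_app_or in Hx. destruct Hx as [Hx|Hx].
    + left; eapply IHe1; eauto; eapply Hom_unl; eauto.
    + right; eapply IHe2; eauto; eapply Hom_unr; eauto.
  - apply in_flat_map in Hx. destruct Hx as (x1 & Hx1 & Hx).
    apply in_map_iff in Hx. destruct Hx as (x2 & <- & Hx2).
    pose proof (IHe1 (Hom_catl _ _ H) _ _ Hx1) as L1.
    pose proof (len_ok _ (Hom_catl _ _ H) _ L1) as E1. rewrite decode_length in E1.
    rewrite decode_app. exists (decode i x1), (decode (i + length x1) x2).
    repeat split; auto. rewrite E1. apply IHe2; auto. eapply Hom_catr; eauto.
Qed.

Lemma G_len : forall e, Hom e -> forall i x, In x (G i e) -> length x = len e.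
Proof.
  intros. rewrite <- (decode_length x i). apply len_ok; auto. apply G_sound; auto.
Qed.

Lemma app_split : forall (A : Type) (l1 l2 l1' l2' : list A),
  l1 ++ l2 = l1' ++ l2' -> length l1 = length l1' -> l1 = l1' /\ l2 = l2'.
Proof.
  induction l1; destruct l1'; simpl; intros; try discriminate; auto.
  injection H as -> H. destruct (IHl1 l2 l1' l2'); auto. subst; auto.
Qed.

Lemma G_complete : forall e, Hom e -> forall i x, lang e (decode i x) -> In x (G i e).
Proof.
  induction e; simpl; intros H i x Hx.
  - destruct x; simpl in Hx; try discriminate. auto.
  - destruct x as [|b [|b' x]]; simpl in Hx; try discriminate.
    injection Hx as <-. apply in_or_app. destruct b; unfold dec.
    + right. rewrite Nat.eqb_refl. simpl; auto.
    + left. simpl. auto.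
  - apply in_or_app. destruct Hx as [Hx|Hx].
    + left; eapply IHe1; eauto; eapply Hom_unl; eauto.
    + right; eapply IHe2; eauto; eapply Hom_unr; eauto.
  - destruct Hx as (u & v & Huv & Hu & Hv).
    pose proof (len_ok _ (Hom_catl _ _ H) _ Hu) as E1.
    assert (Lx : length (decode i x) = length (u ++ v)) by (rewrite Huv; auto).
    rewrite decode_length, length_app in Lx.
    assert (L1 : length (firstn (len e1) x) = len e1) by (rewrite length_firstn; lia).
    assert (Ex : x = firstn (len e1) x ++ skipn (len e1) x) by (symmetry; apply firstn_skipn).
    rewrite Ex in Huv. rewrite Ex.
    rewrite decode_app in Huv.
    apply app_split in Huv; [|rewrite decode_length; lia].
    destruct Huv as [Hu' Hv'].
    apply in_flat_map. exists (firstn (len e1) x). split.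
    + apply IHe1; [eapply Hom_catl; eauto|]. rewrite Hu'; auto.
    + apply in_map. apply IHe2; [eapply Hom_catr; eauto|]. rewrite L1 in Hv'. rewrite Hv'; auto.
Qed.

End K.

Lemma mod_neq : forall K i s, 0 < s < K -> (i + s) mod K <> i mod K.
Proof.
  intros K i s Hs E.
  pose proof (Nat.div_mod_eq i K) as E1. pose proof (Nat.div_mod_eq (i + s) K) as E2.
  rewrite E in E2.
  destruct (le_lt_dec ((i + s) / K) (i / K)) as [Hq|Hq].
  - pose proof (Nat.mul_le_mono_l _ _ K Hq). lia.
  - assert (S (i / K) <= (i + s) / K) as Hq' by lia.
    pose proof (Nat.mul_le_mono_l _ _ K Hq'). lia.
Qed.

Lemma decode_in : forall K x i c, In c (decode K i x) ->
  c = 1 \/ exists t, t < length x /\ c = (i + t) mod K + 2.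
Proof.
  induction x as [|b x IH]; simpl; intros i c H; [destruct H|].
  destruct H as [H|H].
  - unfold dec in H. destruct b; [right; exists 0; split; [lia|]; rewrite Nat.add_0_r; auto|left; auto].
  - destruct (IH _ _ H) as [?|(t & Ht & ->)]; [left; auto|right].
    exists (S t); split; [lia|]. do 2 f_equal. lia.
Qed.

Lemma cnt_cons : forall d l c, cnt (d :: l) c = (if Nat.eqb d c then 1 else 0) + cnt l c.
Proof.
  intros. unfold cnt. simpl. destruct (Nat.eq_dec d c); destruct (Nat.eqb_spec d c); try lia; auto.
Qed.

Lemma cnt_notin : forall l c, ~ In c l -> cnt l c = 0.
Proof. intros. unfold cnt. apply count_occ_not_In; auto. Qed.

Lemma head_det : forall K, 1 <= K -> forall x y i, length x = length y -> length x <= K ->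
  (forall c, Nat.even (cnt (decode K i x) c) = Nat.even (cnt (decode K i y) c)) -> x = y.
Proof.
  intros K HK. induction x as [|b x IH]; destruct y as [|b' y]; intros i Hl Hk Hc; simpl in Hl, Hk;
    try discriminate; auto.
  assert (Hni : forall z, length z < K -> ~ In (i mod K + 2) (decode K (S i) z)).
  { intros z Hz Hin. destruct (decode_in _ _ _ _ Hin) as [?|(t & Ht & E)]; [lia|].
    apply (mod_neq K i (S t)); [lia|]. replace (i + S t) with (S i + t) by lia. lia. }
  assert (b = b').
  { specialize (Hc (i mod K + 2)). change (decode K i (?a :: ?l)) with (dec K i a :: decode K (S i) l) in Hc. rewrite !cnt_cons in Hc.
    rewrite !cnt_notin in Hc by (apply Hni; lia).
    unfold dec in Hc. destruct b, b'; auto; rewrite ?Nat.eqb_refl in Hc;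
    destruct (Nat.eqb_spec 1 (i mod K + 2)); try lia; simpl in Hc; discriminate. }
  subst b'. f_equal. apply (IH y (S i)); [lia|lia|].
  intros c. specialize (Hc c). change (decode K i (?a :: ?l)) with (dec K i a :: decode K (S i) l) in Hc. rewrite !cnt_cons in Hc. eapply even_cancel_l; eauto.
Qed.

Fixpoint allbits (n : nat) : list (list bool) :=
  match n with
  | 0 => [[]]
  | S n => map (cons false) (allbits n) ++ map (cons true) (allbits n)
  end.

Lemma allbits_len : forall n, length (allbits n) = 2 ^ n.
Proof. induction n; simpl; auto. rewrite length_app, !length_map. lia. Qed.

Lemma allbits_in : forall n x, length x = n -> In x (allbits n).
Proof.
  induction n; destruct x as [|b x]; simpl; intros H; try discriminate; auto.
  apply in_or_app. destruct b; [right|left]; apply in_map; auto.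
Qed.

Lemma NoDup_map_on : forall (A B : Type) (f : A -> B) l,
  (forall x y, In x l -> In y l -> f x = f y -> x = y) -> NoDup l -> NoDup (map f l).
Proof. intros. apply NoDup_map_NoDup_ForallPairs; auto. Qed.

Lemma fiber : forall K i m (l : list (list bool)), 1 <= K -> NoDup l ->
  (forall x, In x l -> length x = m) ->
  (forall x y, In x l -> In y l -> forall c,
      Nat.even (cnt (decode K i x) c) = Nat.even (cnt (decode K i y) c)) ->
  length l <= 2 ^ (m - Nat.min m K).
Proof.
  intros K i m l HK Hnd Hlen Hpar. set (r := Nat.min m K).
  rewrite <- (length_map (skipn r)). rewrite <- allbits_len.
  apply NoDup_incl_length.
  - apply NoDup_map_on; auto. intros x y Hx Hy E.
    assert (Lx := Hlen x Hx). assert (Ly := Hlen y Hy).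
    rewrite <- (firstn_skipn r x), <- (firstn_skipn r y). rewrite E. f_equal.
    apply (head_det K HK _ _ i).
    + rewrite !length_firstn. lia.
    + rewrite length_firstn. lia.
    + intros c. specialize (Hpar x y Hx Hy c).
      rewrite <- (firstn_skipn r x), <- (firstn_skipn r y) in Hpar.
      rewrite !decode_app, !cnt_app in Hpar. rewrite E in Hpar.
      rewrite !length_firstn in Hpar.
      replace (Nat.min r (length x)) with (Nat.min r (length y)) in Hpar by lia.
      eapply even_cancel; eauto.
  - intros z Hz. apply in_map_iff in Hz. destruct Hz as (x & <- & Hx).
    apply allbits_in. rewrite length_skipn, (Hlen x Hx). auto.
Qed.

Definition card (l : list (list bool)) := length (nodup (list_eq_dec bool_dec) l).

Lemma card_app : forall l1 l2, card (l1 ++ l2) <= card l1 + card l2.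
Proof.
  intros. unfold card. rewrite <- length_app. apply NoDup_incl_length; [apply NoDup_nodup|].
  intros z Hz. rewrite nodup_In in Hz. apply in_or_app. apply in_app_or in Hz.
  destruct Hz; [left|right]; rewrite nodup_In; auto.
Qed.

Definition prodl (l1 l2 : list (list bool)) :=
  flat_map (fun x => map (fun y => x ++ y) l2) l1.

Lemma prodl_len : forall l1 l2, length (prodl l1 l2) = length l1 * length l2.
Proof.
  induction l1; simpl; intros; auto. unfold prodl in *. simpl. rewrite length_app, length_map, IHl1. auto.
Qed.

Lemma card_prod : forall l1 l2, card (prodl l1 l2) <= card l1 * card l2.
Proof.
  intros. unfold card. rewrite <- prodl_len. apply NoDup_incl_length; [apply NoDup_nodup|].
  intros z Hz. rewrite nodup_In in Hz. unfold prodl in *.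
  apply in_flat_map in Hz. destruct Hz as (x & Hx & Hz). apply in_map_iff in Hz.
  destruct Hz as (y & <- & Hy). apply in_flat_map. exists x. rewrite nodup_In. split; auto.
  apply in_map. rewrite nodup_In. auto.
Qed.

Lemma card_fiber : forall K, 1 <= K -> forall e, Hom e -> forall i,
  card (G K i e) <= 2 ^ (len e - Nat.min (len e) K).
Proof.
  intros K HK e He i. unfold card. apply (fiber K i); auto.
  - apply NoDup_nodup.
  - intros x Hx. rewrite nodup_In in Hx. eapply G_len; eauto.
  - intros x y Hx Hy. rewrite nodup_In in Hx, Hy.
    apply (He (decode K i x) (decode K i y)); apply G_sound; auto.
Qed.

Lemma allbits_nodup : forall n, NoDup (allbits n).
Proof.
  induction n; simpl. constructor; [simpl; tauto|constructor].
  apply NoDup_app.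
  - apply NoDup_map_on; auto. intros x y _ _ H; injection H; auto.
  - apply NoDup_map_on; auto. intros x y _ _ H; injection H; auto.
  - intros a H1 H2. apply in_map_iff in H1, H2. destruct H1 as (? & <- & _).
    destruct H2 as (? & E & _). discriminate.
Qed.

Section Root.
Variable K : nat.
Hypothesis HK : 1 <= K.

Fixpoint ctrue (x : list bool) : nat :=
  match x with [] => 0 | b :: x' => (if b then 1 else 0) + ctrue x' end.

Fixpoint sumK (f : nat -> nat) (r : nat) : nat :=
  match r with 0 => 0 | S r => sumK f r + f r end.

Lemma sumK_add : forall f g r, sumK (fun j => f j + g j) r = sumK f r + sumK g r.
Proof. induction r; simpl; lia. Qed.

Lemma sumK_ind : forall a r, sumK (fun j => if Nat.eqb a (j + 2) then 1 else 0) r =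
  if (2 <=? a) && (a <? r + 2) then 1 else 0.
Proof.
  intros a. induction r; cbn [sumK].
  - destruct (Nat.leb_spec 2 a), (Nat.ltb_spec a (0 + 2)); simpl; lia.
  - rewrite IHr. destruct (Nat.eqb_spec a (r + 2)), (Nat.leb_spec 2 a), (Nat.ltb_spec a (r + 2)),
      (Nat.ltb_spec a (S r + 2)); simpl; lia.
Qed.

Lemma sumK_even : forall f r, (forall j, j < r -> Nat.even (f j) = true) -> Nat.even (sumK f r) = true.
Proof.
  induction r; simpl; intros H; auto. rewrite Nat.even_add, IHr, H; auto.
Qed.

Lemma sumK_ext : forall f g r, (forall j, f j = g j) -> sumK f r = sumK g r.
Proof. induction r; simpl; intros H; auto. Qed.

Lemma sumK_0 : forall r, sumK (fun _ => 0) r = 0.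
Proof. induction r; simpl; lia. Qed.

Lemma ctrue_sum : forall x i, ctrue x = sumK (fun j => cnt (decode K i x) (j + 2)) K.
Proof.
  induction x as [|b x IH]; intros i; cbn [ctrue decode].
  - rewrite (sumK_ext _ (fun _ => 0)); [rewrite sumK_0; auto|]. intros; reflexivity.
  - rewrite (IH (S i)).
    assert (E : sumK (fun j => cnt (dec K i b :: decode K (S i) x) (j + 2)) K =
       sumK (fun j => (if Nat.eqb (dec K i b) (j + 2) then 1 else 0) +
                                cnt (decode K (S i) x) (j + 2)) K) by (apply sumK_ext; intros; apply cnt_cons).
    rewrite E. clear E.
    rewrite sumK_add, sumK_ind. f_equal. unfold dec. destruct b.
    + pose proof (Nat.mod_upper_bound i K ltac:(lia)).
      destruct (Nat.leb_spec 2 (i mod K + 2)), (Nat.ltb_spec (i mod K + 2) (K + 2)); simpl; lia.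
    + reflexivity.
Qed.

Definition T (y : list bool) (c : nat) := cnt (decode K K y) c.

Fixpoint mk (y : list bool) (s r : nat) : list bool :=
  match r with
  | 0 => []
  | S r' => negb (Nat.even (T y (s + 2))) :: mk y (S s) r'
  end.

Lemma mk_len : forall y r s, length (mk y s r) = r.
Proof. induction r; simpl; auto. Qed.

Lemma mk_cnt : forall y r s, s + r <= K -> forall j,
  cnt (decode K s (mk y s r)) (j + 2) =
  if (s <=? j) && (j <? s + r) then (if Nat.even (T y (j + 2)) then 0 else 1) else 0.
Proof.
  intros y. induction r; intros s Hs j; cbn [mk decode].
  - unfold cnt; simpl. destruct (Nat.leb_spec s j), (Nat.ltb_spec j (s + 0)); simpl; lia.
  - rewrite cnt_cons, IHr by lia. unfold dec.
    rewrite (Nat.mod_small s K) by lia.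
    destruct (Nat.eqb_spec j s).
    + subst j. rewrite Nat.leb_refl. destruct (Nat.leb_spec (S s) s); [lia|].
      destruct (Nat.ltb_spec s (s + S r)); [|lia]. simpl.
      destruct (Nat.even (T y (s + 2))); simpl negb; cbv iota; rewrite ?Nat.eqb_refl; auto.
      destruct (Nat.eqb_spec 1 (s + 2)); lia.
    + assert (E : (if negb (Nat.even (T y (s + 2))) then s + 2 else 1) =? j + 2 = false).
      { destruct (negb _); apply Nat.eqb_neq; lia. }
      rewrite E.
      destruct (Nat.leb_spec (S s) j), (Nat.leb_spec s j), (Nat.ltb_spec j (S s + r)),
        (Nat.ltb_spec j (s + S r)); simpl; lia.
Qed.

Definition xw (y : list bool) := mk y 0 K ++ y.

Lemma xw_even : forall y j, j < K -> Nat.even (cnt (decode K 0 (xw y)) (j + 2)) = true.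
Proof.
  intros y j Hj. unfold xw. rewrite decode_app, cnt_app, mk_len, mk_cnt by lia.
  simpl plus. destruct (Nat.leb_spec 0 j), (Nat.ltb_spec j K); try lia. simpl.
  fold (T y (j + 2)). rewrite Nat.even_add. destruct (Nat.even (T y (j + 2))); reflexivity.
Qed.

Lemma cnt1 : forall x i, cnt (decode K i x) 1 + ctrue x = length x.
Proof.
  induction x as [|b x IH]; intros i; cbn [decode ctrue length].
  - reflexivity.
  - rewrite cnt_cons. specialize (IH (S i)). unfold dec. destruct b.
    + destruct (Nat.eqb_spec (i mod K + 2) 1); lia.
    + simpl. lia.
Qed.

Lemma xw_L : forall n y, K <= n -> Nat.Even n -> length y = n - K ->
  L_even n (S K) (decode K 0 (xw y)).
Proof.
  intros n y Hn Hev Hy. split; [|split].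
  - rewrite decode_length. unfold xw. rewrite length_app, mk_len. lia.
  - intros a Ha. destruct (decode_in _ _ _ _ Ha) as [->|(t & _ & ->)]; [lia|].
    pose proof (Nat.mod_upper_bound (0 + t) K ltac:(lia)). lia.
  - intros j Hj. destruct (Nat.eq_dec j 1) as [->|Hj1].
    + pose proof (cnt1 (xw y) 0) as E.
      rewrite (ctrue_sum _ 0) in E.
      assert (Hs := sumK_even (fun j => cnt (decode K 0 (xw y)) (j + 2)) K
                 (fun j Hj => xw_even y j Hj)).
      assert (Hl : length (xw y) = n) by (unfold xw; rewrite length_app, mk_len; lia).
      rewrite Hl in E. apply Nat.even_spec in Hev. rewrite <- E, Nat.even_add, Hs in Hev.
      change (Nat.even (cnt (decode K 0 (xw y)) 1) = true).
      destruct (Nat.even (cnt (decode K 0 (xw y)) 1)); simpl in Hev; auto.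
    + replace j with ((j - 2) + 2) by lia. apply xw_even. lia.
Qed.

End Root.

Lemma Hom_L : forall e n k, (forall w, lang e w <-> L_even n k w) -> Hom e.
Proof.
  intros e n k H w w' Hw Hw'. apply H in Hw, Hw'.
  destruct Hw as (L1 & A1 & P1), Hw' as (L2 & A2 & P2). split; [lia|].
  intros c. destruct (le_lt_dec 1 c); [destruct (le_lt_dec c k)|].
  - rewrite P1, P2; auto.
  - rewrite !cnt_notin; auto; intros Hc; [apply A2 in Hc|apply A1 in Hc]; lia.
  - rewrite !cnt_notin; auto; intros Hc; [apply A2 in Hc|apply A1 in Hc]; lia.
Qed.

Lemma allbits_len_in : forall m y, In y (allbits m) -> length y = m.
Proof.
  induction m; simpl; intros y H. destruct H as [<-|[]]; auto.
  apply in_app_or in H. destruct H as [H|H]; apply in_map_iff in H; destruct H as (z & <- & Hz);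
  simpl; f_equal; auto.
Qed.

Lemma root_card : forall K, 1 <= K -> forall n e, K <= n -> Nat.Even n ->
  (forall w, lang e w <-> L_even n (S K) w) -> 2 ^ (n - K) <= card (G K 0 e).
Proof.
  intros K HK n e Hn Hev He. pose proof (Hom_L _ _ _ He) as Hh.
  rewrite <- allbits_len, <- (length_map (xw K)).
  unfold card. apply NoDup_incl_length.
  - apply NoDup_map_on; [|apply allbits_nodup].
    intros x y _ _ E. assert (E' := f_equal (skipn K) E). unfold xw in E'.
    rewrite !skipn_app, !mk_len, Nat.sub_diag in E'. rewrite !(skipn_all2 (mk K _ 0 K)) in E' by (rewrite mk_len; lia). simpl in E'. auto.
  - intros z Hz. apply in_map_iff in Hz. destruct Hz as (y & <- & Hy).
    rewrite nodup_In. apply G_complete; auto. apply He. apply xw_L; auto.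
    apply allbits_len_in; auto.
Qed.
Open Scope R_scope.

Lemma pow_le1 : forall x n, 0 <= x <= 1 -> x ^ n <= 1.
Proof. intros. rewrite <- (pow1 n). apply pow_incr. lra. Qed.

Lemma exp_nat : forall x n, exp x ^ n = exp (INR n * x).
Proof.
  intros x n. induction n.
  - simpl. rewrite Rmult_0_l, exp_0. auto.
  - rewrite S_INR. simpl pow. rewrite IHn, <- exp_plus. f_equal. ring.
Qed.

Lemma exp_half : exp (1/2) <= 2.
Proof.
  assert (H : exp (1/2) * exp (1/2) = exp 1) by (rewrite <- exp_plus; f_equal; lra).
  pose proof exp_le_3. pose proof (exp_pos (1/2)). nra.
Qed.

Lemma exp_le' : forall x y, x <= y -> exp x <= exp y.
Proof. intros x y [H|H]; [left; apply exp_increasing; auto|rewrite H; lra]. Qed.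

Lemma aux_pow : forall (a b N : nat), (0 < b)%nat -> (2 * N <= b)%nat ->
  (1 + INR a / INR b) ^ N <= 2 ^ a.
Proof.
  intros a b N Hb HN.
  assert (Hb' : 0 < INR b) by (apply lt_0_INR; lia).
  assert (Ha : 0 <= INR a) by apply pos_INR.
  assert (Hab : 0 <= INR a / INR b) by (apply Rmult_le_pos; [lra|left; apply Rinv_0_lt_compat; lra]).
  apply Rle_trans with (exp (INR a / INR b) ^ N).
  { apply pow_incr. split; [lra|]. apply exp_ineq1_le. }
  rewrite exp_nat.
  apply Rle_trans with (exp (1/2) ^ a).
  - rewrite exp_nat. apply exp_le'.
    assert (H2 : INR N * 2 <= INR b).
    { replace 2 with (INR 2) by (simpl; lra). rewrite <- mult_INR. apply le_INR. lia. }
    assert (E : INR a / INR b * INR b = INR a) by (field; lra).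
    assert (0 <= INR N) by apply pos_INR. nra.
  - apply pow_incr. split; [left; apply exp_pos|apply exp_half].
Qed.

Definition hh (k m : nat) : R := (INR m / (3 * INR k)) ^ (k - 2).
Definition EE (K m1 m2 : nat) : R := 2 ^ (Nat.min m1 K + Nat.min m2 K - Nat.min (m1 + m2) K).

Lemma D_pos : forall k, (2 <= k)%nat -> 0 < 3 * INR k.
Proof. intros. assert (0 < INR k) by (apply lt_0_INR; lia). lra. Qed.

Lemma hh_nonneg : forall k m, (2 <= k)%nat -> 0 <= hh k m.
Proof.
  intros. unfold hh. apply pow_le. pose proof (D_pos k H). pose proof (pos_INR m).
  apply Rmult_le_pos; [lra|left; apply Rinv_0_lt_compat; lra].
Qed.

Lemma hh_le1 : forall k m, (2 <= k)%nat -> (m <= 3 * k)%nat -> hh k m <= 1.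
Proof.
  intros. unfold hh. apply pow_le1. pose proof (D_pos k H). pose proof (pos_INR m).
  assert (INR m <= 3 * INR k).
  { replace 3 with (INR 3) by (simpl; lra). rewrite <- mult_INR. apply le_INR. lia. }
  split.
  - apply Rmult_le_pos; [lra|left; apply Rinv_0_lt_compat; lra].
  - apply Rmult_le_reg_r with (3 * INR k); [lra|]. unfold Rdiv. rewrite Rmult_assoc, Rinv_l; lra.
Qed.

Lemma EE_ge1 : forall K a b, 1 <= EE K a b.
Proof. intros. apply pow_R1_Rle. lra. Qed.

Lemma small_side : forall k a b, (2 <= k)%nat -> (a < k - 1)%nat -> (3 * k < a + b)%nat ->
  hh k (a + b) <= hh k b * EE (k - 1) a b.
Proof.
  intros k a b Hk Ha Hab. unfold EE.
  replace (Nat.min a (k - 1) + Nat.min b (k - 1) - Nat.min (a + b) (k - 1))%nat with a by lia.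
  unfold hh. pose proof (D_pos k Hk).
  assert (Hb : 0 < INR b) by (apply lt_0_INR; lia).
  replace (INR (a + b) / (3 * INR k)) with (INR b / (3 * INR k) * (1 + INR a / INR b))
    by (rewrite plus_INR; field; lra).
  rewrite Rpow_mult_distr. apply Rmult_le_compat_l.
  - apply pow_le. apply Rmult_le_pos; [lra|left; apply Rinv_0_lt_compat; lra].
  - apply aux_pow; lia.
Qed.

Lemma both_big : forall k a b, (2 <= k)%nat -> (k - 1 <= a)%nat -> (k - 1 <= b)%nat -> (b <= a)%nat ->
  hh k (a + b) <= hh k a * EE (k - 1) a b.
Proof.
  intros k a b Hk Ha Hb Hba. unfold EE.
  replace (Nat.min a (k - 1) + Nat.min b (k - 1) - Nat.min (a + b) (k - 1))%nat with (k - 1)%nat by lia.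
  unfold hh. pose proof (D_pos k Hk).
  assert (Hi : 0 < / (3 * INR k)) by (apply Rinv_0_lt_compat; lra).
  assert (Hab : INR (a + b) <= 2 * INR a).
  { rewrite plus_INR. assert (INR b <= INR a) by (apply le_INR; lia). lra. }
  apply Rle_trans with ((2 * (INR a / (3 * INR k))) ^ (k - 2)).
  - apply pow_incr. split.
    + apply Rmult_le_pos; [apply pos_INR|lra].
    + unfold Rdiv. rewrite <- Rmult_assoc. apply Rmult_le_compat_r; lra.
  - rewrite Rpow_mult_distr, Rmult_comm. apply Rmult_le_compat_l.
    + apply pow_le. apply Rmult_le_pos; [apply pos_INR|lra].
    + apply Rle_pow; [lra|lia].
Qed.

Lemma num : forall k m1 m2, (2 <= k)%nat ->
  hh k (m1 + m2) <= EE (k - 1) m1 m2 \/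
  hh k (m1 + m2) <= hh k m1 * EE (k - 1) m1 m2 \/
  hh k (m1 + m2) <= hh k m2 * EE (k - 1) m1 m2.
Proof.
  intros k m1 m2 Hk.
  destruct (le_lt_dec (m1 + m2) (3 * k)) as [Hs|Hs].
  { left. apply Rle_trans with 1; [apply hh_le1; auto|apply EE_ge1]. }
  destruct (lt_dec m1 (k - 1)) as [H1|H1].
  { right; right. apply small_side; auto. }
  destruct (lt_dec m2 (k - 1)) as [H2|H2].
  { right; left. rewrite Nat.add_comm.
    replace (EE (k - 1) m1 m2) with (EE (k - 1) m2 m1)
      by (unfold EE; f_equal; rewrite (Nat.add_comm m2 m1); lia).
    apply small_side; auto; lia. }
  destruct (le_lt_dec m2 m1) as [H3|H3].
  - right; left. apply both_big; lia.
  - right; right. rewrite Nat.add_comm.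
    replace (EE (k - 1) m1 m2) with (EE (k - 1) m2 m1)
      by (unfold EE; f_equal; rewrite (Nat.add_comm m2 m1); lia).
    apply both_big; lia.
Qed.

Lemma combine : forall h h1 h2 c c1 c2 F1 F2 E s1 s2 S,
  0 <= h -> 0 <= h1 -> 0 <= h2 -> 0 <= c -> 0 <= c1 -> 0 <= c2 -> 0 <= F1 -> 0 <= F2 -> 0 <= E ->
  0 <= s1 -> 0 <= s2 ->
  c <= c1 * c2 -> c1 <= F1 -> c2 <= F2 -> h1 * c1 <= s1 * F1 -> h2 * c2 <= s2 * F2 ->
  1 + s1 + s2 <= S ->
  (h <= E \/ h <= h1 * E \/ h <= h2 * E) -> h * c <= S * (F1 * F2 * E).
Proof.
  intros h h1 h2 c c1 c2 F1 F2 E s1 s2 S Hh Hh1 Hh2 Hc Hc1 Hc2 HF1 HF2 HE Hs1 Hs2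
    Hcc Hc1F Hc2F I1 I2 HS Hcase.
  assert (P0 : h * c <= h * (c1 * c2)) by (apply Rmult_le_compat_l; auto).
  assert (0 <= F1 * F2 * E) by (repeat apply Rmult_le_pos; auto).
  destruct Hcase as [Hq|[Hq|Hq]].
  - assert (c1 * c2 <= F1 * F2) by (apply Rmult_le_compat; auto).
    assert (h * (c1 * c2) <= E * (F1 * F2)) by (apply Rmult_le_compat; auto; apply Rmult_le_pos; auto).
    nra.
  - assert (h * (c1 * c2) <= (h1 * E) * (c1 * F2)).
    { apply Rmult_le_compat; auto. apply Rmult_le_pos; auto. apply Rmult_le_compat_l; auto. }
    assert ((h1 * c1) * (E * F2) <= (s1 * F1) * (E * F2)) by (apply Rmult_le_compat_r; auto; apply Rmult_le_pos; auto).
    assert (s1 * (F1 * F2 * E) <= S * (F1 * F2 * E)) by (apply Rmult_le_compat_r; auto; lra).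
    nra.
  - assert (h * (c1 * c2) <= (h2 * E) * (F1 * c2)).
    { apply Rmult_le_compat; auto. apply Rmult_le_pos; auto. apply Rmult_le_compat_r; auto. }
    assert ((h2 * c2) * (E * F1) <= (s2 * F2) * (E * F1)) by (apply Rmult_le_compat_r; auto; apply Rmult_le_pos; auto).
    assert (s2 * (F1 * F2 * E) <= S * (F1 * F2 * E)) by (apply Rmult_le_compat_r; auto; lra).
    nra.
Qed.

Lemma rsize_ge1 : forall e, (1 <= rsize e)%nat.
Proof. destruct e; simpl; lia. Qed.

Lemma card_F : forall k, (2 <= k)%nat -> forall e, Hom e -> forall i,
  INR (card (G (k - 1) i e)) <= 2 ^ (len e - Nat.min (len e) (k - 1)).
Proof.
  intros. replace 2 with (INR 2) by (simpl; lra). rewrite <- pow_INR. apply le_INR.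
  apply card_fiber; auto. lia.
Qed.

Lemma potential : forall k, (2 <= k)%nat -> forall e, Hom e -> forall i,
  hh k (len e) * INR (card (G (k - 1) i e)) <= INR (rsize e) * 2 ^ (len e - Nat.min (len e) (k - 1)).
Proof.
  intros k Hk.
  assert (Small : forall e, Hom e -> forall i, hh k (len e) <= 1 ->
    hh k (len e) * INR (card (G (k - 1) i e)) <= INR (rsize e) * 2 ^ (len e - Nat.min (len e) (k - 1))).
  { intros e He i Hh. pose proof (card_F k Hk e He i). pose proof (hh_nonneg k (len e) Hk).
    pose proof (pos_INR (card (G (k - 1) i e))).
    assert (1 <= INR (rsize e)) by (apply (le_INR 1); apply rsize_ge1).
    apply Rle_trans with (1 * INR (card (G (k - 1) i e))).
    - apply Rmult_le_compat_r; auto.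
    - rewrite Rmult_1_l. apply Rle_trans with (1 * 2 ^ (len e - Nat.min (len e) (k - 1))); [lra|].
      apply Rmult_le_compat_r; auto. apply pow_le; lra. }
  induction e as [| a | f IHf g IHg | f IHf g IHg]; intros He i.
  - apply Small; auto. apply hh_le1; simpl; lia.
  - apply Small; auto. apply hh_le1; simpl; lia.
  - assert (Hf := Hom_unl _ _ He). assert (Hg := Hom_unr _ _ He).
    assert (Lg : len g = len f).
    { destruct (lang_ne f) as [u Hu], (lang_ne g) as [v Hv].
      rewrite <- (len_ok _ Hf u Hu), <- (len_ok _ Hg v Hv).
      symmetry. apply (He u v); simpl; auto. }
    specialize (IHf Hf i). specialize (IHg Hg i). rewrite Lg in IHg.
    simpl len. simpl G. cbn [rsize].
    assert (Cu : INR (card (G (k - 1) i f ++ G (k - 1) i g)) <=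
                 INR (card (G (k - 1) i f)) + INR (card (G (k - 1) i g))).
    { rewrite <- plus_INR. apply le_INR. apply card_app. }
    rewrite S_INR, plus_INR.
    pose proof (hh_nonneg k (len f) Hk).
    set (F := 2 ^ (len f - Nat.min (len f) (k - 1))) in *.
    assert (0 <= F) by (apply pow_le; lra).
    apply Rle_trans with (hh k (len f) * (INR (card (G (k - 1) i f)) + INR (card (G (k - 1) i g)))).
    + apply Rmult_le_compat_l; auto.
    + nra.
  - assert (Hf := Hom_catl _ _ He). assert (Hg := Hom_catr _ _ He).
    specialize (IHf Hf i). specialize (IHg Hg (i + len f)%nat).
    simpl len. cbn [rsize].
    change (G (k - 1) i (RCat f g)) with (prodl (G (k - 1) i f) (G (k - 1) (i + len f) g)).
    assert (Cp : INR (card (prodl (G (k - 1) i f) (G (k - 1) (i + len f) g))) <=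
                 INR (card (G (k - 1) i f)) * INR (card (G (k - 1) (i + len f) g))).
    { rewrite <- mult_INR. apply le_INR. apply card_prod. }
    replace (2 ^ (len f + len g - Nat.min (len f + len g) (k - 1)))
      with (2 ^ (len f - Nat.min (len f) (k - 1)) * 2 ^ (len g - Nat.min (len g) (k - 1)) *
            EE (k - 1) (len f) (len g)).
    2: { unfold EE. rewrite <- !pow_add. f_equal. lia. }
    apply (combine _ (hh k (len f)) (hh k (len g)) _ (INR (card (G (k - 1) i f)))
             (INR (card (G (k - 1) (i + len f) g))) _ _ _ (INR (rsize f)) (INR (rsize g)));
      try apply hh_nonneg; try apply pos_INR; try lra; auto.
    + apply pow_le; lra.
    + apply pow_le; lra.
    + unfold EE; apply pow_le; lra.
    + apply card_F; auto.
    + apply card_F; auto.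
    + rewrite S_INR, plus_INR. lra.
    + apply num; auto.
Qed.

Lemma lnk : forall k, (3 <= k)%nat -> 3 / 4 <= ln (INR k).
Proof.
  intros k Hk. assert (H3 : 3 <= INR k).
  { replace 3 with (INR 3) by (simpl; lra). apply le_INR; auto. }
  destruct (Rle_or_lt (3/4) (ln (INR k))) as [H|H]; auto.
  exfalso. apply exp_increasing in H. rewrite exp_ln in H by lra.
  assert (exp (3/4) < exp 1) by (apply exp_increasing; lra).
  pose proof exp_le_3. lra.
Qed.

Theorem theorem7p3 :
  exists c : R, 0 < c /\
    forall (n k : nat), Nat.Even n -> (2 <= k)%nat ->
    forall e : regex, (forall w, lang e w <-> L_even n k w) ->
      c * (INR n) ^ (k - 2) / (4 * INR k * ln (INR k)) ^ (k - 2)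
        <= INR (rsize e).
Proof.
  exists 1. split; [lra|]. intros n k Hn Hk e He.
  assert (R1 : 1 <= INR (rsize e)) by (apply (le_INR 1); apply rsize_ge1).
  destruct (Nat.eq_dec k 2) as [->|Hk3].
  { simpl. lra. }
  assert (Hk' : (3 <= k)%nat) by lia.
  pose proof (lnk k Hk') as Hl.
  assert (Hkr : 3 <= INR k) by (replace 3 with (INR 3) by (simpl; lra); apply le_INR; auto).
  set (Q := 4 * INR k * ln (INR k)).
  assert (HQ : 3 * INR k <= Q) by (unfold Q; nra).
  unfold Rdiv. rewrite Rmult_1_l, <- pow_inv, <- Rpow_mult_distr.
  assert (Hn0 : 0 <= INR n) by apply pos_INR.
  assert (HQi : 0 < / Q) by (apply Rinv_0_lt_compat; lra).
  destruct (le_lt_dec n (3 * k)) as [Hs|Hs].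
  - apply Rle_trans with 1; auto. apply pow_le1. split; [apply Rmult_le_pos; lra|].
    assert (INR n <= 3 * INR k).
    { replace 3 with (INR 3) by (simpl; lra). rewrite <- mult_INR. apply le_INR. lia. }
    apply Rmult_le_reg_r with Q; [lra|]. rewrite Rmult_assoc, Rinv_l; lra.
  - apply Rle_trans with (hh k n).
    + unfold hh. apply pow_incr. split; [apply Rmult_le_pos; lra|].
      apply Rmult_le_compat_l; auto. apply Rinv_le_contravar; lra.
    + assert (Hh : Hom e) by (apply (Hom_L _ _ _ He)).
      assert (Ln : len e = n).
      { destruct (lang_ne e) as [w Hw]. rewrite <- (len_ok _ Hh w Hw).
        apply He in Hw. destruct Hw; auto. }
      pose proof (potential k (ltac:(lia)) e Hh 0%nat) as P. rewrite Ln in P.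
      assert (He' : forall w, lang e w <-> L_even n (S (k - 1)) w).
      { replace (S (k - 1)) with k by lia. auto. }
      pose proof (root_card (k - 1) ltac:(lia) n e ltac:(lia) Hn He') as C.
      replace (Nat.min n (k - 1)) with (k - 1)%nat in P by lia.
      apply le_INR in C. rewrite pow_INR in C. simpl (INR 2) in C.
      replace (1 + 1) with 2 in C by lra.
      set (P2 := 2 ^ (n - (k - 1))) in *.
      assert (0 < P2) by (apply pow_lt; lra).
      pose proof (hh_nonneg k n ltac:(lia)).
      apply Rmult_le_reg_r with P2; auto.
      apply Rle_trans with (hh k n * INR (card (G (k - 1) 0 e))); auto.
      apply Rmult_le_compat_l; auto.
Qed.
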